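(* Let $\lambda$ be the real root and $\mu,\bar\mu$ the non-real roots of $t^3-t-2$. Then (i) $\mu^n\notin\mathbb R$ for every $n\ge1$; (ii) the set $\{\arg(\mu^n)\mid n\ge1\}$ is dense in $[0,2\pi]$. *)

(* Defs.v *)
From Stdlib Require Import Reals ClassicalEpsilon.
From Coquelicot Require Import Coquelicot.
Open Scope R_scope.

Definition is_arg (z : C) (theta : R) : Prop :=
  0 <= theta < 2 * PI /\
  Re z = Cmod z * cos theta /\ Im z = Cmod z * sin theta.

(* arg z : the argument of z in [0, 2*PI) (unique for z <> 0). *)
Definition arg (z : C) : R :=
  epsilon (inhabits 0) (fun theta => is_arg z theta).

(* Main.v *)
Require Import Defs.
From Stdlib Require Import Reals Lia Lra ZArith Classical ClassicalEpsilon.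
From Coquelicot Require Import Coquelicot.
Open Scope R_scope.

Lemma per_lemma (m : Z) : cos (2 * PI * IZR m) = 1 /\ sin (2 * PI * IZR m) = 0.
Proof.
assert (Hs : sin (PI * IZR m) = 0) by (apply sin_eq_0_1; exists m; ring).
replace (2 * PI * IZR m) with (2 * (PI * IZR m)) by ring.
rewrite cos_2a_sin, sin_2a, Hs. split; ring.
Qed.

Lemma cos_per (t : R) (m : Z) : cos (t + 2 * PI * IZR m) = cos t.
Proof. destruct (per_lemma m) as [C S]. rewrite cos_plus, C, S. ring. Qed.
Lemma sin_per (t : R) (m : Z) : sin (t + 2 * PI * IZR m) = sin t.
Proof. destruct (per_lemma m) as [C S]. rewrite sin_plus, C, S. ring. Qed.

Lemma is_arg_unique (z : C) (a b : R) : 0 < Cmod z -> is_arg z a -> is_arg z b -> a = b.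
Proof.
intros Hz [Ha [Ra Ia]] [Hb [Rb Ib]].
assert (Ec : cos a = cos b) by (apply Rmult_eq_reg_l with (Cmod z); lra).
assert (Es : sin a = sin b) by (apply Rmult_eq_reg_l with (Cmod z); lra).
assert (S0 : sin (a - b) = 0) by (rewrite sin_minus, Ec, Es; ring).
assert (C1 : cos (a - b) = 1).
{ rewrite cos_minus, Ec, Es. pose proof (sin2_cos2 b). unfold Rsqr in H. lra. }
destruct (sin_eq_0_0 _ S0) as [k Hk].
pose proof PI_RGT_0.
assert (-2 < IZR k < 2).
{ split.
  - apply Rmult_lt_reg_r with PI. lra. lra.
  - apply Rmult_lt_reg_r with PI. lra. lra. }
destruct H0 as [H1 H2]. apply lt_IZR in H1. apply lt_IZR in H2.
assert (k = -1 \/ k = 0 \/ k = 1)%Z as [ -> | [ -> | -> ] ] by lia.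
- rewrite Hk in C1. replace (IZR (-1) * PI) with (- PI) in C1 by (simpl; ring).
  rewrite cos_neg, cos_PI in C1. lra.
- lra.
- rewrite Hk in C1. replace (IZR 1 * PI) with PI in C1 by (simpl; ring).
  rewrite cos_PI in C1. lra.
Qed.

Lemma arg_eq (z : C) (p : R) : 0 < Cmod z -> is_arg z p -> arg z = p.
Proof.
intros Hz Hp. unfold arg.
pose proof (epsilon_spec (inhabits 0) (fun theta => is_arg z theta) (ex_intro _ p Hp)) as H.
apply (is_arg_unique z); auto.
Qed.

Lemma demoivre (r t : R) (n : nat) :
  Cpow (r * cos t, r * sin t) n = (r ^ n * cos (INR n * t), r ^ n * sin (INR n * t)).
Proof.
induction n as [|n IH].
- simpl. rewrite Rmult_0_l, cos_0, sin_0. apply injective_projections; simpl; ring.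
- change (Cpow (r * cos t, r * sin t) (S n)) with (Cmult (r * cos t, r * sin t) (Cpow (r * cos t, r * sin t) n)).
  rewrite IH, S_INR, Rmult_plus_distr_r, Rmult_1_l, cos_plus, sin_plus.
  apply injective_projections; simpl; ring.
Qed.

Lemma polar (x y : R) : y <> 0 -> exists t, x = Cmod (x, y) * cos t /\ y = Cmod (x, y) * sin t.
Proof.
intros Hy. set (r := Cmod (x, y)).
assert (Hr2 : r * r = x ^ 2 + y ^ 2).
{ unfold r, Cmod; simpl fst; simpl snd. apply sqrt_sqrt. nra. }
assert (Hr : 0 < r).
{ unfold r, Cmod; simpl fst; simpl snd. apply sqrt_lt_R0. nra. }
set (c := x / r).
assert (Hc : -1 <= c <= 1).
{ unfold c. assert (x * x <= r * r) by nra.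
  split.
  - apply Rmult_le_reg_r with r. lra. unfold Rdiv. rewrite Rmult_assoc, Rinv_l; nra.
  - apply Rmult_le_reg_r with r. lra. unfold Rdiv. rewrite Rmult_assoc, Rinv_l; nra. }
assert (Hs : sin (acos c) = Rabs y / r).
{ rewrite sin_acos by exact Hc.
  replace (1 - c²) with (Rsqr (y / r)).
  - rewrite sqrt_Rsqr_abs. unfold Rdiv. rewrite Rabs_mult, Rabs_inv, (Rabs_right r); lra.
  - unfold c, Rsqr. apply Rmult_eq_reg_r with (r * r); [|nra].
    field_simplify; try lra. }
destruct (Rle_or_lt 0 y) as [Hy0|Hy0].
- exists (acos c). rewrite cos_acos by exact Hc. rewrite Hs, Rabs_right by lra.
  unfold c. fold r. split; field; lra.
- exists (- acos c). rewrite cos_neg, sin_neg, cos_acos by exact Hc. rewrite Hs, Rabs_left by lra.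
  unfold c. fold r. split; field; lra.
Qed.
Lemma desc_step (a b : Z) : (b*b*b - a*a*b - 2*a*a*a = 0)%Z -> (a mod 3 = 0 /\ b mod 3 = 0)%Z.
Proof.
intros H.
pose proof (Z.div_mod a 3 ltac:(lia)) as Ha.
pose proof (Z.div_mod b 3 ltac:(lia)) as Hb.
pose proof (Z.mod_pos_bound a 3 ltac:(lia)).
pose proof (Z.mod_pos_bound b 3 ltac:(lia)).
set (q := (a/3)%Z) in *. set (p := (b/3)%Z) in *.
set (r := (a mod 3)%Z) in *. set (s := (b mod 3)%Z) in *.
clearbody q p r s. subst a b.
assert (r = 0 \/ r = 1 \/ r = 2)%Z as [ -> | [ -> | -> ] ] by lia;
assert (s = 0 \/ s = 1 \/ s = 2)%Z as [ -> | [ -> | -> ] ] by lia; ring_simplify in H; try lia.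
Qed.

Lemma descent (n : nat) : forall a b : Z, (Z.abs_nat a <= n)%nat ->
  (b*b*b - a*a*b - 2*a*a*a = 0)%Z -> a = 0%Z.
Proof.
induction n as [|n IH]; intros a b Hn H.
- lia.
- destruct (desc_step a b H) as [Ha Hb].
  pose proof (Z.div_mod a 3 ltac:(lia)) as Ha'.
  pose proof (Z.div_mod b 3 ltac:(lia)) as Hb'.
  rewrite Ha in Ha'. rewrite Hb in Hb'.
  set (q := (a/3)%Z) in *. set (p := (b/3)%Z) in *. clearbody q p.
  assert (Hq : q = 0%Z).
  { apply (IH q p). lia. subst a b. ring_simplify in H. lia. }
  lia.
Qed.

Fixpoint abc (n : nat) : Z * Z * Z :=
  match n with
  | O => (0%Z, 0%Z, 1%Z)
  | S n => let '(a, b, c) := abc n in (b, (a + c)%Z, (2 * a)%Z)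
  end.

Lemma abc_C (z : C) : (z ^ 3 = z + 2)%C -> forall n,
  (z ^ n = RtoC (IZR (fst (fst (abc n)))) * z ^ 2 + RtoC (IZR (snd (fst (abc n)))) * z
     + RtoC (IZR (snd (abc n))))%C.
Proof.
intros Hz n. induction n as [|n IH].
- simpl. apply injective_projections; simpl; ring.
- change (z ^ S n)%C with (z * z ^ n)%C. rewrite IH.
  cbn [abc]. destruct (abc n) as [[a b] c]. cbn [fst snd].
  rewrite plus_IZR, mult_IZR, !RtoC_plus, !RtoC_mult.
  transitivity (RtoC (IZR a) * z^3 + RtoC (IZR b) * z^2 + RtoC (IZR c) * z)%C.
  { simpl. ring. }
  rewrite Hz. apply injective_projections; simpl; ring.
Qed.

Lemma abc_R (z : R) : z ^ 3 = z + 2 -> forall n,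
  z ^ n = IZR (fst (fst (abc n))) * z ^ 2 + IZR (snd (fst (abc n))) * z
     + IZR (snd (abc n)).
Proof.
intros Hz n. induction n as [|n IH].
- simpl. ring.
- change (z ^ S n) with (z * z ^ n). rewrite IH.
  cbn [abc]. destruct (abc n) as [[a b] c]. cbn [fst snd].
  rewrite plus_IZR, mult_IZR.
  transitivity (IZR a * z^3 + IZR b * z^2 + IZR c * z). { ring. }
  rewrite Hz. ring.
Qed.

Lemma pow_lt_strict (a b : R) (n : nat) : 0 <= a < b -> (1 <= n)%nat -> a ^ n < b ^ n.
Proof.
intros [Ha Hb] Hn. induction n as [|n IH]. lia.
destruct n as [|n]. simpl; lra.
assert (IH' : a ^ S n < b ^ S n) by (apply IH; lia).
change (a * a ^ S n < b * b ^ S n).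
assert (0 <= a ^ S n) by (apply pow_le; lra).
nra.
Qed.

Lemma part1 (x y : R) : ((x, y) ^ 3 - (x, y) - 2)%C = RtoC 0 -> y <> 0 ->
  forall n : nat, (1 <= n)%nat -> Im ((x, y) ^ n)%C <> 0.
Proof.
intros H Hy n Hn HIm.
assert (E1 := f_equal fst H). assert (E2 := f_equal snd H). simpl in E1, E2.
ring_simplify in E1. ring_simplify in E2.
assert (Y : y ^ 2 = 3 * x ^ 2 - 1).
{ assert (y * (3 * x ^ 2 - y ^ 2 - 1) = 0) as E by (rewrite <- E2; ring).
  apply Rmult_integral in E. destruct E as [E|E]. contradiction. lra. }
set (l := - 2 * x).
assert (Hl : l ^ 3 = l + 2).
{ unfold l. assert (y^2 * x = (3 * x ^ 2 - 1) * x) by (rewrite Y; ring). nra. }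
assert (Hz : ((x, y) ^ 3 = (x, y) + 2)%C).
{ transitivity (((x, y) ^ 3 - (x, y) - 2) + (x, y) + 2)%C. ring. rewrite H. ring. }
pose proof (abc_C _ Hz n) as Ez.
pose proof (abc_R _ Hl n) as El.
destruct (abc n) as [[a b] c]. cbn [fst snd] in Ez, El.
rewrite Ez in HIm. simpl in HIm. ring_simplify in HIm.
assert (Hb : IZR b = IZR a * l).
{ unfold l. assert (y * (IZR a * 2 * x + IZR b) = 0) as E by (rewrite <- HIm; ring).
  apply Rmult_integral in E. destruct E as [E|E]. contradiction. lra. }
assert (Hd : (b*b*b - a*a*b - 2*a*a*a = 0)%Z).
{ apply eq_IZR. rewrite !minus_IZR, !mult_IZR, Hb.
  transitivity (IZR a * IZR a * IZR a * (l ^ 3 - l - 2)). simpl; ring.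
  rewrite Hl. simpl. ring. }
assert (Ha : a = 0%Z) by (apply (descent (Z.abs_nat a) a b); auto).
subst a. rewrite Rmult_0_l in Hb. rewrite Hb in Ez, El.
assert (Ez' : ((x, y) ^ n)%C = RtoC (IZR c)).
{ rewrite Ez. apply injective_projections; simpl; ring. }
assert (M := f_equal Cmod Ez'). rewrite Cmod_pow, Cmod_R in M.
assert (El' : l ^ n = IZR c) by (rewrite El; ring).
rewrite <- El', <- RPow_abs in M.
assert (Hlt : Cmod (x, y) < Rabs l).
{ unfold Cmod. simpl fst; simpl snd. rewrite <- sqrt_Rsqr_abs. apply sqrt_lt_1.
  nra. unfold Rsqr; nra. unfold Rsqr, l. nra. }
assert (Hlt2 : Cmod (x, y) ^ n < Rabs l ^ n).
{ apply pow_lt_strict; auto. split; auto. apply Cmod_ge_0. }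
lra.
Qed.
Lemma php : forall N (g : nat -> nat), (forall i, (i <= N)%nat -> (g i < N)%nat) ->
  exists i j, (i < j <= N)%nat /\ g i = g j.
Proof.
induction N as [|N IH]; intros g Hg.
- specialize (Hg 0%nat (le_n 0)). lia.
- destruct (classic (exists i, (i <= N)%nat /\ g i = g (S N))) as [[i [Hi E]]|Hno].
  + exists i, (S N). split. lia. exact E.
  + set (g' := fun i => if Nat.eqb (g i) N then g (S N) else g i).
    assert (HgN : forall i, (i <= N)%nat -> g i <> g (S N)).
    { intros i Hi E. apply Hno. exists i. auto. }
    destruct (IH g') as [i [j [Hij E]]].
    { intros i Hi. unfold g'. destruct (Nat.eqb_spec (g i) N) as [e|e].
      - specialize (Hg (S N) (le_n _)). specialize (HgN i Hi). lia.
      - specialize (Hg i ltac:(lia)). lia. }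
    unfold g' in E.
    destruct (Nat.eqb_spec (g i) N) as [ei|ei]; destruct (Nat.eqb_spec (g j) N) as [ej|ej].
    * exists i, j. split. lia. lia.
    * exfalso. apply (HgN j). lia. auto.
    * exfalso. apply (HgN i). lia. auto.
    * exists i, j. split. lia. auto.
Qed.

Definition fl (r : R) : Z := (up r - 1)%Z.
Lemma fl_spec (r : R) : IZR (fl r) <= r < IZR (fl r) + 1.
Proof.
unfold fl. rewrite minus_IZR. destruct (archimed r) as [H1 H2]. lra.
Qed.

Lemma INR_Z2N (K : Z) : (0 <= K)%Z -> INR (Z.to_nat K) = IZR K.
Proof. intros. rewrite INR_IZR_INZ, Z2Nat.id; auto. Qed.

Lemma core (s eps y : R) : 0 < s < eps -> s <= 1 -> 0 <= y <= 1 ->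
  exists k : nat, (1 <= k)%nat /\ 0 < INR k * s <= 1 /\ Rabs (INR k * s - y) < eps.
Proof.
intros Hs Hs1 Hy.
destruct (Rlt_dec y s) as [Hlt|Hge].
- exists 1%nat. simpl. split. lia. split. lra. rewrite Rabs_right; lra.
- set (K := fl (y / s)). pose proof (fl_spec (y / s)) as HK. fold K in HK.
  assert (Hys : 1 <= y / s).
  { apply Rmult_le_reg_r with s. lra. unfold Rdiv. rewrite Rmult_assoc, Rinv_l; lra. }
  assert (HK0 : (0 < K)%Z) by (apply lt_IZR; lra).
  exists (Z.to_nat K). rewrite INR_Z2N by lia.
  assert (HK1 : 1 <= IZR K) by (apply IZR_le; lia).
  assert (A1 : IZR K * s <= y).
  { replace y with (y / s * s) by (field; lra). apply Rmult_le_compat_r; lra. }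
  assert (A2 : y < (IZR K + 1) * s).
  { replace y with (y / s * s) at 1 by (field; lra). apply Rmult_lt_compat_r; lra. }
  split. lia. split. split; nra. rewrite Rabs_left1; lra.
Qed.

Definition fr (r : R) : R := r - IZR (fl r).

Lemma density (al : R) : (forall n : nat, (1 <= n)%nat -> forall m : Z, INR n * al <> IZR m) ->
  forall y eps, 0 <= y <= 1 -> 0 < eps ->
  exists (n : nat) (m : Z), (1 <= n)%nat /\ 0 <= INR n * al - IZR m < 1 /\
     Rabs (INR n * al - IZR m - y) < eps.
Proof.
intros H y eps Hy He.
set (N := Z.to_nat (up (/ eps))).
destruct (archimed (/ eps)) as [U1 U2].
assert (Hie : 0 < / eps) by (apply Rinv_0_lt_compat; lra).
assert (Hup : (0 < up (/ eps))%Z) by (apply lt_IZR; lra).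
assert (HN : INR N = IZR (up (/ eps))) by (apply INR_Z2N; lia).
assert (HN0 : 0 < INR N) by lra.
assert (HNe : / INR N < eps).
{ rewrite <- (Rinv_inv eps). apply Rinv_lt_contravar. nra. lra. }
assert (HN1 : / INR N <= 1).
{ assert (1 <= INR N). { rewrite HN. apply IZR_le. lia. }
  rewrite <- Rinv_1. apply Rinv_le_contravar; lra. }
set (g := fun i : nat => Z.to_nat (fl (INR N * fr (INR i * al)))).
assert (Hfr : forall r, 0 <= fr r < 1) by (intro r; unfold fr; pose proof (fl_spec r); lra).
assert (Hg0 : forall i, (0 <= fl (INR N * fr (INR i * al)))%Z).
{ intro i. pose proof (fl_spec (INR N * fr (INR i * al))). pose proof (Hfr (INR i * al)).
  assert (-1 < IZR (fl (INR N * fr (INR i * al)))) by nra.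
  apply Z.lt_pred_le. apply lt_IZR. simpl. lra. }
destruct (php N g) as [i [j [Hij Eg]]].
{ intros i _. unfold g. pose proof (fl_spec (INR N * fr (INR i * al))). pose proof (Hfr (INR i * al)).
  specialize (Hg0 i).
  assert (IZR (fl (INR N * fr (INR i * al))) < IZR (Z.of_nat N)) by (rewrite <- INR_IZR_INZ; nra).
  apply lt_IZR in H2. lia. }
unfold g in Eg. apply Z2Nat.inj in Eg; [|apply Hg0|apply Hg0].
set (u := fr (INR i * al)) in *. set (v := fr (INR j * al)) in *.
assert (Huv : Rabs (v - u) < / INR N).
{ pose proof (fl_spec (INR N * u)). pose proof (fl_spec (INR N * v)). rewrite Eg in H0.
  assert (Rabs (INR N * (v - u)) < 1) by (apply Rabs_def1; nra).
  rewrite Rabs_mult, Rabs_right in H2 by lra.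
  apply Rmult_lt_reg_l with (INR N). lra. rewrite Rinv_r; lra. }
set (d := (j - i)%nat). set (M := (fl (INR j * al) - fl (INR i * al))%Z).
set (t := v - u).
assert (Hd : INR d * al = t + IZR M).
{ unfold d, t, M, u, v, fr. rewrite minus_INR by lia. rewrite minus_IZR. ring. }
assert (Hd1 : (1 <= d)%nat) by (unfold d; lia).
assert (Ht0 : t <> 0).
{ intro E. apply (H d Hd1 M). rewrite Hd, E. ring. }
destruct (Rlt_or_le 0 t) as [Htp|Htn].
- rewrite Rabs_right in Huv by (fold t; lra).
  destruct (core t eps y ltac:(fold t in Huv; lra) ltac:(fold t in Huv; lra) Hy) as [k [Hk1 [Hk2 Hk3]]].
  exists (k * d)%nat, (Z.of_nat k * M)%Z.
  assert (Ekd : INR (k * d) * al - IZR (Z.of_nat k * M) = INR k * t).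
  { rewrite mult_INR, mult_IZR, <- INR_IZR_INZ, Rmult_assoc, Hd. ring. }
  rewrite Ekd. split. nia. split; [|exact Hk3]. split. lra.
  destruct (Req_dec (INR k * t) 1) as [E1|E1]; [|lra].
  exfalso. apply (H (k * d)%nat ltac:(nia) (Z.of_nat k * M + 1)%Z).
  rewrite plus_IZR. lra.
- assert (Htn' : t < 0) by lra.
  rewrite Rabs_left in Huv by (fold t; lra).
  destruct (core (- t) eps (1 - y) ltac:(fold t in Huv; lra) ltac:(fold t in Huv; lra) ltac:(lra))
    as [k [Hk1 [Hk2 Hk3]]].
  exists (k * d)%nat, (Z.of_nat k * M - 1)%Z.
  assert (Ekd : INR (k * d) * al - IZR (Z.of_nat k * M - 1) = 1 - INR k * (- t)).
  { rewrite mult_INR, minus_IZR, mult_IZR, <- INR_IZR_INZ, Rmult_assoc, Hd. ring. }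
  rewrite Ekd. split. nia. split. lra.
  replace (1 - INR k * - t - y) with (- (INR k * - t - (1 - y))) by ring.
  rewrite Rabs_Ropp. exact Hk3.
Qed.

Theorem lemma14p1 (mu : C) :
  (mu ^ 3 - mu - 2)%C = RtoC 0 -> Im mu <> 0 ->
  (forall n : nat, (1 <= n)%nat -> Im (mu ^ n)%C <> 0) /\
  (forall x eps : R, 0 <= x <= 2 * PI -> 0 < eps ->
     exists n : nat, (1 <= n)%nat /\ Rabs (arg (mu ^ n)%C - x) < eps).
Proof.
intros H Hy. destruct mu as [x y]. simpl in Hy.
pose proof (part1 x y H Hy) as P1. split; [exact P1|].
intros x0 eps Hx0 Heps.
destruct (polar x y Hy) as [t [Hxt Hyt]].
assert (Hr : 0 < Cmod (x, y)).
{ unfold Cmod; simpl fst; simpl snd. apply sqrt_lt_R0. nra. }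
set (r := Cmod (x, y)) in *.
assert (Hz : (x, y) = (r * cos t, r * sin t)) by (apply injective_projections; simpl; lra).
pose proof PI_RGT_0 as HPI.
set (al := t / (2 * PI)).
assert (Hden : forall n : nat, (1 <= n)%nat -> forall m : Z, INR n * al <> IZR m).
{ intros n Hn m E. apply (P1 n Hn). rewrite Hz, demoivre. simpl.
  assert (E2 : INR n * t = IZR (2 * m) * PI).
  { rewrite mult_IZR. unfold al in E.
    replace (INR n * t) with (INR n * (t / (2 * PI)) * (2 * PI)) by (field; lra).
    rewrite E. simpl. ring. }
  rewrite (sin_eq_0_1 (INR n * t)) by (exists (2 * m)%Z; exact E2). ring. }
destruct (density al Hden (x0 / (2 * PI)) (eps / (2 * PI))) as [n [m [Hn [Hb Habs]]]].
{ split. apply Rmult_le_pos; [lra|]. left; apply Rinv_0_lt_compat; lra.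
  apply Rmult_le_reg_r with (2 * PI). lra. unfold Rdiv. rewrite Rmult_assoc, Rinv_l; lra. }
{ apply Rmult_lt_0_compat; [lra|]. apply Rinv_0_lt_compat; lra. }
exists n. split; [exact Hn|].
set (p := 2 * PI * (INR n * al - IZR m)).
assert (Hm : 0 < Cmod ((x, y) ^ n)%C) by (rewrite Cmod_pow; apply pow_lt; exact Hr).
assert (Harg : is_arg ((x, y) ^ n)%C p).
{ unfold is_arg. rewrite Cmod_pow. fold r.
  assert (Et : INR n * t = p + 2 * PI * IZR m) by (unfold p, al; field; lra).
  split.
  - unfold p. split.
    + apply Rmult_le_pos; lra.
    + replace (2 * PI) with (2 * PI * 1) at 2 by ring. apply Rmult_lt_compat_l; lra.
  - rewrite Hz, demoivre. simpl fst; simpl snd. rewrite Et, cos_per, sin_per. split; reflexivity. }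
rewrite (arg_eq _ _ Hm Harg).
replace (p - x0) with (2 * PI * (INR n * al - IZR m - x0 / (2 * PI))) by (unfold p; field; lra).
rewrite Rabs_mult, Rabs_right by lra.
replace eps with (2 * PI * (eps / (2 * PI))) by (field; lra).
apply Rmult_lt_compat_l; lra.
Qed.
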